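(* Let $f$ be a harmonic function on $K$, let $[v,w]$ be any edge of any graph $G_m$ (in particular $[p_1,p_2]$), and let $g(t)=f(v+t(w-v))$, $t\in[0,1]$. Then $g$ is differentiable at $t=\frac13$ and $g'(\frac13)=0$. In particular, for the edge $[p_1,p_2]\cong[0,1]$, $(f|_{[0,1]})'(\frac13)=0$.
   Context: Let $p_0,p_1,p_2$ be the vertices of a unit equilateral triangle in $\mathbb{R}^2$, $F_i(x)=(x+p_i)/2$, and $K$ the Sierpinski gasket (the attractor of $F_0,F_1,F_2$). For words $w$ of length $m$, $F_w=F_{w_1}\circ\cdots\circ F_{w_m}$; the minimal triangles of the graph $G_m$ are the triangles with vertices $F_w(p_0),F_w(p_1),F_w(p_2)$, and the edges of $G_m$ are their sides (segments of length $2^{-m}$ contained in $K$). A continuous $f:K\to\mathbb{R}$ is harmonic if for every $m\ge0$ and every minimal triangle of $G_m$ with vertices $v_i,v_j,v_k$, the value at the midpoint $v_{ij}$ of $[v_i,v_j]$ is $\frac15(2f(v_i)+2f(v_j)+f(v_k))$. The edge $[p_1,p_2]$ is identified with $[0,1]$ via $t\mapsto p_1+t(p_2-p_1)$. *)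

(* Defs.v *)
From Stdlib Require Import Reals Lra List.
Open Scope R_scope.

Definition pt := (R * R)%type.

Definition padd (x y : pt) : pt := (fst x + fst y, snd x + snd y).
Definition psub (x y : pt) : pt := (fst x - fst y, snd x - snd y).
Definition pscal (a : R) (x : pt) : pt := (a * fst x, a * snd x).

Definition pdist (x y : pt) : R :=
  sqrt ((fst x - fst y) ^ 2 + (snd x - snd y) ^ 2).

Definition unit_equilateral (p0 p1 p2 : pt) : Prop :=
  pdist p0 p1 = 1 /\ pdist p1 p2 = 1 /\ pdist p0 p2 = 1.

Definition vert (p0 p1 p2 : pt) (i : nat) : pt :=
  match i with 0%nat => p0 | 1%nat => p1 | _ => p2 end.

Definition Fmap (p0 p1 p2 : pt) (i : nat) (x : pt) : pt :=
  pscal (1/2) (padd x (vert p0 p1 p2 i)).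

Definition word (m : nat) (w : list nat) : Prop :=
  length w = m /\ Forall (fun i => (i < 3)%nat) w.

Definition Fword (p0 p1 p2 : pt) (w : list nat) (x : pt) : pt :=
  fold_right (fun i y => Fmap p0 p1 p2 i y) x w.

Definition filled_triangle (p0 p1 p2 : pt) (x : pt) : Prop :=
  exists a b c : R, 0 <= a /\ 0 <= b /\ 0 <= c /\ a + b + c = 1 /\
    x = padd (pscal a p0) (padd (pscal b p1) (pscal c p2)).

(* Sierpinski gasket: the attractor of F_0,F_1,F_2, realized as the
   intersection over m of the unions over words |w| = m of F_w(filled triangle). *)
Definition SG (p0 p1 p2 : pt) (x : pt) : Prop :=
  forall m : nat, exists w : list nat, word m w /\
    exists y : pt, filled_triangle p0 p1 p2 y /\ x = Fword p0 p1 p2 w y.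

Definition continuous_on_set (K : pt -> Prop) (f : pt -> R) : Prop :=
  forall x, K x -> forall eps : R, 0 < eps -> exists delta : R, 0 < delta /\
    forall y, K y -> pdist x y < delta -> Rabs (f y - f x) < eps.

Definition midpoint (x y : pt) : pt := pscal (1/2) (padd x y).

(* harmonic function on K: continuous on K and satisfying the 2-2-1 / 5
   midpoint rule on every minimal triangle of every G_m *)
Definition harmonic (p0 p1 p2 : pt) (f : pt -> R) : Prop :=
  continuous_on_set (SG p0 p1 p2) f /\
  forall (m : nat) (w : list nat), word m w ->
  forall i j k : nat, (i < 3)%nat -> (j < 3)%nat -> (k < 3)%nat ->
    i <> j -> j <> k -> i <> k ->
    f (midpoint (Fword p0 p1 p2 w (vert p0 p1 p2 i)) (Fword p0 p1 p2 w (vert p0 p1 p2 j)))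
    = (2 * f (Fword p0 p1 p2 w (vert p0 p1 p2 i))
       + 2 * f (Fword p0 p1 p2 w (vert p0 p1 p2 j))
       + f (Fword p0 p1 p2 w (vert p0 p1 p2 k))) / 5.

(* Main.v *)
Require Import Defs.
From Stdlib Require Import Reals List Lra Lia.
From Coquelicot Require Import Coquelicot.
Open Scope R_scope.

Lemma pt_ext (a b : pt) : fst a = fst b -> snd a = snd b -> a = b.
Proof. destruct a, b; simpl; intros; subst; auto. Qed.

Definition Lin (a b : pt) (t : R) : pt := padd a (pscal t (psub b a)).

Lemma abs_le_iff x a : Rabs x <= a <-> -a <= x <= a.
Proof. unfold Rabs; destruct (Rcase_abs x); split; intros; lra. Qed.

Lemma Fword_app p0 p1 p2 L1 L2 x :
  Fword p0 p1 p2 (L1 ++ L2) x = Fword p0 p1 p2 L1 (Fword p0 p1 p2 L2 x).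
Proof. unfold Fword; rewrite fold_right_app; reflexivity. Qed.

Lemma Fmap_Lin p0 p1 p2 c a b t :
  Fmap p0 p1 p2 c (Lin a b t) = Lin (Fmap p0 p1 p2 c a) (Fmap p0 p1 p2 c b) t.
Proof. apply pt_ext; unfold Lin, Fmap, padd, pscal, psub; simpl; ring. Qed.

Lemma Fword_Lin p0 p1 p2 L a b t :
  Fword p0 p1 p2 L (Lin a b t) = Lin (Fword p0 p1 p2 L a) (Fword p0 p1 p2 L b) t.
Proof. induction L; simpl; auto. rewrite IHL. apply Fmap_Lin. Qed.

Lemma mid_Lin a b : midpoint a b = Lin a b (1/2).
Proof. apply pt_ext; unfold Lin, midpoint, padd, pscal, psub; simpl; field. Qed.

Lemma Fword_mid p0 p1 p2 L a b :
  Fword p0 p1 p2 L (midpoint a b) = midpoint (Fword p0 p1 p2 L a) (Fword p0 p1 p2 L b).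
Proof. rewrite !mid_Lin. apply Fword_Lin. Qed.

Definition filled := filled_triangle.

Lemma filled_Fmap p0 p1 p2 c y : filled p0 p1 p2 y -> filled p0 p1 p2 (Fmap p0 p1 p2 c y).
Proof.
  intros (a & b & cc & Ha & Hb & Hc & Hs & ->).
  destruct c as [|[|c]]; simpl.
  - exists ((a+1)/2), (b/2), (cc/2). repeat split; try lra.
    apply pt_ext; unfold Fmap, padd, pscal; simpl; field.
  - exists (a/2), ((b+1)/2), (cc/2). repeat split; try lra.
    apply pt_ext; unfold Fmap, padd, pscal; simpl; field.
  - exists (a/2), (b/2), ((cc+1)/2). repeat split; try lra.
    apply pt_ext; unfold Fmap, padd, pscal; simpl; field.
Qed.

Lemma filled_Fword p0 p1 p2 L y : filled p0 p1 p2 y -> filled p0 p1 p2 (Fword p0 p1 p2 L y).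
Proof. induction L; simpl; auto. intros; apply filled_Fmap; auto. Qed.

Lemma pdist_Fmap p0 p1 p2 c x y :
  pdist (Fmap p0 p1 p2 c x) (Fmap p0 p1 p2 c y) <= pdist x y.
Proof.
  unfold pdist; apply sqrt_le_1_alt; unfold Fmap, padd, pscal; simpl.
  set (a := fst x - fst y); set (b := snd x - snd y).
  replace (1 / 2 * (fst x + fst (vert p0 p1 p2 c)) - 1 / 2 * (fst y + fst (vert p0 p1 p2 c))) with (a/2) by (unfold a; field).
  replace (1 / 2 * (snd x + snd (vert p0 p1 p2 c)) - 1 / 2 * (snd y + snd (vert p0 p1 p2 c))) with (b/2) by (unfold b; field).
  nra.
Qed.

Lemma pdist_Fword p0 p1 p2 L x y :
  pdist (Fword p0 p1 p2 L x) (Fword p0 p1 p2 L y) <= pdist x y.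
Proof. induction L; simpl. lra. eapply Rle_trans; [apply pdist_Fmap|auto]. Qed.

Lemma pdist_Lin a b s d : pdist (Lin a b s) (Lin a b d) = Rabs (s - d) * pdist a b.
Proof.
  unfold pdist. rewrite <- sqrt_Rsqr_abs, <- sqrt_mult_alt by apply Rle_0_sqr.
  f_equal. unfold Lin, padd, pscal, psub, Rsqr; simpl; ring.
Qed.

Lemma pow_decr x n m : 0 <= x <= 1 -> (n <= m)%nat -> x ^ m <= x ^ n.
Proof.
  intros Hx H; induction H. lra. simpl.
  assert (0 <= x ^ m) by (apply pow_le; lra). nra.
Qed.
Section Main.
Variables (p0 p1 p2 : pt) (f : pt -> R) (u : list nat) (i j k : nat).
Hypothesis Hharm : harmonic p0 p1 p2 f.
Hypothesis Hu : List.Forall (fun c => (c < 3)%nat) u.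
Hypotheses (Hi : (i < 3)%nat) (Hj : (j < 3)%nat) (Hk : (k < 3)%nat)
  (Hij : i <> j) (Hjk : j <> k) (Hik : i <> k).

Let P l := vert p0 p1 p2 l.
Let F W x := Fword p0 p1 p2 W x.
Let h x := f (Fword p0 p1 p2 u x).
Let E s := Lin (P i) (P j) s.
Definition onij (W : list nat) := List.Forall (fun c => c = i \/ c = j) W.

Lemma onij_lt W : onij W -> List.Forall (fun c => (c < 3)%nat) (u ++ W).
Proof.
  intros H; apply Forall_app; split; auto.
  eapply Forall_impl; [|exact H]. intros a [->| ->]; auto.
Qed.

Lemma harmW W a b c : onij W -> (a < 3)%nat -> (b < 3)%nat -> (c < 3)%nat ->
  a <> b -> b <> c -> a <> c ->
  h (F W (midpoint (P a) (P b))) = (2 * h (F W (P a)) + 2 * h (F W (P b)) + h (F W (P c))) / 5.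
Proof.
  intros HW; intros. unfold h, F. rewrite !Fword_mid, <- !Fword_app.
  destruct Hharm as [_ Hh2]. apply (Hh2 (length (u ++ W))); auto.
  split; auto. apply onij_lt; auto.
Qed.

Lemma mid_same x : midpoint x x = x.
Proof. apply pt_ext; unfold midpoint, padd, pscal; simpl; field. Qed.

Lemma Fsnoc W c x : F (W ++ c :: nil) x = F W (Fmap p0 p1 p2 c x).
Proof. unfold F; rewrite Fword_app; reflexivity. Qed.

Definition hx W := h (F W (P i)).
Definition hy W := h (F W (P j)).
Definition hz W := h (F W (P k)).

Lemma step_i W : onij W ->
  hx (W ++ i :: nil) = hx W /\
  hy (W ++ i :: nil) = (2 * hx W + 2 * hy W + hz W) / 5 /\
  hz (W ++ i :: nil) = (2 * hx W + hy W + 2 * hz W) / 5.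
Proof.
  intros HW; unfold hx, hy, hz; rewrite !Fsnoc.
  change (Fmap p0 p1 p2 i (P i)) with (midpoint (P i) (P i)).
  change (Fmap p0 p1 p2 i (P j)) with (midpoint (P j) (P i)).
  change (Fmap p0 p1 p2 i (P k)) with (midpoint (P k) (P i)).
  rewrite mid_same. split; auto.
  rewrite (harmW W j i k), (harmW W k i j); auto. split; lra.
Qed.

Lemma step_j W : onij W ->
  hx (W ++ j :: nil) = (2 * hx W + 2 * hy W + hz W) / 5 /\
  hy (W ++ j :: nil) = hy W /\
  hz (W ++ j :: nil) = (hx W + 2 * hy W + 2 * hz W) / 5.
Proof.
  intros HW; unfold hx, hy, hz; rewrite !Fsnoc.
  change (Fmap p0 p1 p2 j (P j)) with (midpoint (P j) (P j)).
  change (Fmap p0 p1 p2 j (P i)) with (midpoint (P i) (P j)).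
  change (Fmap p0 p1 p2 j (P k)) with (midpoint (P k) (P j)).
  rewrite mid_same.
  rewrite (harmW W i j k), (harmW W k j i); auto. split; [lra|split; [auto|lra]].
Qed.

Definition inbox lo hi W := lo <= hx W <= hi /\ lo <= hy W <= hi /\ lo <= hz W <= hi.

Lemma onij_snoc W c : onij W -> c = i \/ c = j -> onij (W ++ c :: nil).
Proof. intros; apply Forall_app; split; auto. Qed.

Lemma box_ext lo hi W' : onij W' -> forall W, onij W -> inbox lo hi W -> inbox lo hi (W ++ W').
Proof.
  induction 1 as [|c W' Hc HW' IH]; intros W HW Hb.
  - rewrite app_nil_r; auto.
  - replace (W ++ c :: W') with ((W ++ c :: nil) ++ W') by (rewrite <- app_assoc; reflexivity).
    apply IH. apply onij_snoc; auto.
    destruct Hb as (B1 & B2 & B3).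
    destruct Hc as [-> | ->].
    + destruct (step_i W HW) as (E1 & E2 & E3). unfold inbox; rewrite E1, E2, E3; lra.
    + destruct (step_j W HW) as (E1 & E2 & E3). unfold inbox; rewrite E1, E2, E3; lra.
Qed.

Lemma Fi_E s : Fmap p0 p1 p2 i (E s) = E (s / 2).
Proof. apply pt_ext; unfold E, Lin, Fmap, padd, pscal, psub; simpl; fold (P i); field. Qed.
Lemma Fj_E s : Fmap p0 p1 p2 j (E s) = E ((1 + s) / 2).
Proof. apply pt_ext; unfold E, Lin, Fmap, padd, pscal, psub; simpl; fold (P j); field. Qed.
Lemma E0 : E 0 = P i.
Proof. apply pt_ext; unfold E, Lin, padd, pscal, psub; simpl; ring. Qed.

Lemma E_dense n : forall s, 0 <= s <= 1 -> exists W, onij W /\ exists d,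
  F W (P i) = E d /\ Rabs (d - s) <= (/2) ^ n.
Proof.
  induction n; intros s Hs.
  - exists nil; split; [constructor|]. exists 0; split; [symmetry; apply E0|].
    apply abs_le_iff; simpl; lra.
  - destruct (Rle_lt_dec s (1/2)).
    + destruct (IHn (2 * s)) as (W & HW & d & Hd & Hd2); [lra|].
      exists (i :: W); split; [constructor; auto|]. exists (d/2); split.
      * change (F (i :: W) (P i)) with (Fmap p0 p1 p2 i (F W (P i))). rewrite Hd; apply Fi_E.
      * apply abs_le_iff in Hd2; apply abs_le_iff; simpl; lra.
    + destruct (IHn (2 * s - 1)) as (W & HW & d & Hd & Hd2); [lra|].
      exists (j :: W); split; [constructor; auto|]. exists ((1+d)/2); split.
      * change (F (j :: W) (P i)) with (Fmap p0 p1 p2 j (F W (P i))). rewrite Hd; apply Fj_E.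
      * apply abs_le_iff in Hd2; apply abs_le_iff; simpl; lra.
Qed.

Lemma E_rep n : forall s, 0 <= s <= 1 -> exists W s', length W = n /\ onij W /\
  0 <= s' <= 1 /\ E s = F W (E s').
Proof.
  induction n; intros s Hs.
  - exists nil, s; repeat split; auto; try lra. constructor.
  - destruct (Rle_lt_dec s (1/2)).
    + destruct (IHn (2 * s)) as (W & s' & HL & HW & Hs' & HE); [lra|].
      exists (i :: W), s'; repeat split; simpl; auto; try lra. constructor; auto.
      change (E s = Fmap p0 p1 p2 i (F W (E s'))). rewrite <- HE, Fi_E. f_equal; field.
    + destruct (IHn (2 * s - 1)) as (W & s' & HL & HW & Hs' & HE); [lra|].
      exists (j :: W), s'; repeat split; simpl; auto; try lra. constructor; auto.
      change (E s = Fmap p0 p1 p2 j (F W (E s'))). rewrite <- HE, Fj_E. f_equal; field.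
Qed.

Lemma E_filled s : 0 <= s <= 1 -> filled p0 p1 p2 (E s).
Proof.
  intros Hs. unfold E, P, filled, filled_triangle.
  destruct i as [|[|[|i']]]; [| | |lia]; destruct j as [|[|[|j']]]; try lia; simpl.
  - exists (1-s), s, 0. repeat split; try lra. apply pt_ext; unfold Lin, padd, pscal, psub; simpl; ring.
  - exists (1-s), 0, s. repeat split; try lra. apply pt_ext; unfold Lin, padd, pscal, psub; simpl; ring.
  - exists s, (1-s), 0. repeat split; try lra. apply pt_ext; unfold Lin, padd, pscal, psub; simpl; ring.
  - exists 0, (1-s), s. repeat split; try lra. apply pt_ext; unfold Lin, padd, pscal, psub; simpl; ring.
  - exists s, 0, (1-s). repeat split; try lra. apply pt_ext; unfold Lin, padd, pscal, psub; simpl; ring.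
  - exists 0, s, (1-s). repeat split; try lra. apply pt_ext; unfold Lin, padd, pscal, psub; simpl; ring.
Qed.

Lemma SG_pt L s : List.Forall (fun c => (c < 3)%nat) L -> 0 <= s <= 1 ->
  SG p0 p1 p2 (Fword p0 p1 p2 L (E s)).
Proof.
  intros HL Hs m.
  destruct (E_rep m s Hs) as (W & s' & Hlen & HW & Hs' & HE).
  set (M := L ++ W).
  assert (HM : List.Forall (fun c => (c < 3)%nat) M).
  { apply Forall_app; split; auto. eapply Forall_impl; [|exact HW].
    intros a [->| ->]; auto. }
  assert (Hlen2 : (m <= length M)%nat) by (unfold M; rewrite length_app; lia).
  exists (firstn m M). split.
  - split. apply firstn_length_le; auto.
    rewrite <- (firstn_skipn m M) in HM. apply Forall_app in HM; tauto.
  - exists (Fword p0 p1 p2 (skipn m M) (E s')). split.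
    + apply filled_Fword, E_filled; auto.
    + rewrite <- Fword_app, firstn_skipn. unfold M; rewrite Fword_app, HE; reflexivity.
Qed.


Lemma exists_small (a : R) : 0 < a -> exists n, (/2) ^ n < a.
Proof.
  intros Ha. destruct (pow_lt_1_zero (/2)) with (y := a) as [N HN]; auto.
  rewrite Rabs_right; lra.
  exists N. specialize (HN N (le_n _)). rewrite Rabs_right in HN; auto.
  apply Rle_ge, pow_le; lra.
Qed.

Lemma box_all W lo hi : onij W ->
  (forall W', onij W' -> lo <= h (F (W ++ W') (P i)) <= hi) ->
  forall s, 0 <= s <= 1 -> lo <= h (F W (E s)) <= hi.
Proof.
  intros HW Hbox s Hs.
  destruct Hharm as [Hcont _].
  set (X := Fword p0 p1 p2 (u ++ W) (E s)).
  assert (HX : SG p0 p1 p2 X) by (apply SG_pt; auto; apply onij_lt; auto).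
  assert (HhX : h (F W (E s)) = f X) by (unfold h, F, X; rewrite Fword_app; reflexivity).
  set (L := pdist (P i) (P j)).
  assert (HL : 0 <= L) by (unfold L, pdist; apply sqrt_pos).
  assert (key : forall eps, 0 < eps -> exists W', onij W' /\ Rabs (h (F (W ++ W') (P i)) - f X) < eps).
  { intros eps Heps. destruct (Hcont X HX eps Heps) as (delta & Hd & Hdel).
    destruct (exists_small (delta / (L + 1))) as [n Hn].
    { apply Rdiv_lt_0_compat; lra. }
    destruct (E_dense n s Hs) as (W' & HW' & d & Hd1 & Hd2).
    exists W'; split; auto.
    assert (HY : h (F (W ++ W') (P i)) = f (Fword p0 p1 p2 (u ++ W) (E d))).
    { unfold h, F. rewrite !Fword_app. fold (F W' (P i)). rewrite Hd1. reflexivity. }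
    rewrite HY. apply Hdel.
    - rewrite <- Hd1. unfold F. rewrite <- Fword_app, <- E0. apply SG_pt; [|lra].
      rewrite <- app_assoc. apply onij_lt. apply Forall_app; auto.
    - eapply Rle_lt_trans. apply pdist_Fword. unfold E. rewrite pdist_Lin. fold L.
      rewrite Rabs_minus_sym.
      assert (Hp : 0 < (/2) ^ n) by (apply pow_lt; lra).
      assert ((/2)^n * (L + 1) < delta).
      { apply (Rmult_lt_compat_r (L+1)) in Hn; [|lra].
        replace (delta / (L + 1) * (L + 1)) with delta in Hn by (field; lra). lra. }
      assert (0 <= Rabs (d - s)) by apply Rabs_pos. nra. }
  rewrite HhX. split.
  - destruct (Rle_lt_dec lo (f X)) as [?|Hlt]; auto.
    destruct (key (lo - f X)) as (W' & HW' & Habs); [lra|].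
    specialize (Hbox W' HW'). apply Rabs_def2 in Habs. lra.
  - destruct (Rle_lt_dec (f X) hi) as [?|Hlt]; auto.
    destruct (key (f X - hi)) as (W' & HW' & Habs); [lra|].
    specialize (Hbox W' HW'). apply Rabs_def2 in Habs. lra.
Qed.

Fixpoint wm (m : nat) : list nat :=
  match m with O => nil | S m' => wm m' ++ i :: j :: nil end.

Lemma wm_onij m : onij (wm m).
Proof. induction m; simpl. constructor. apply Forall_app; split; auto. Qed.

Lemma wm_E m s : F (wm m) (E s) = E (1/3 + (s - 1/3) * (/4) ^ m).
Proof.
  revert s; induction m; intros s; simpl wm.
  - unfold F; simpl. f_equal; field.
  - unfold F; rewrite Fword_app.
    change (Fword p0 p1 p2 (i :: j :: nil) (E s)) with (Fmap p0 p1 p2 i (Fmap p0 p1 p2 j (E s))).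
    rewrite Fj_E, Fi_E. unfold F in IHm. rewrite IHm.
    f_equal. simpl. field.
Qed.

Definition Nm m := Rmax (Rabs (hx (wm m) - hz (wm m))) (Rabs (hy (wm m) - hz (wm m)) / 2).

Lemma Nm_step m : Nm (S m) <= 11/50 * Nm m.
Proof.
  unfold Nm. simpl wm. replace (wm m ++ i :: j :: nil) with ((wm m ++ i :: nil) ++ j :: nil)
    by (rewrite <- app_assoc; reflexivity).
  destruct (step_j (wm m ++ i :: nil)) as (A1 & A2 & A3). apply onij_snoc; auto. apply wm_onij.
  destruct (step_i (wm m)) as (B1 & B2 & B3). apply wm_onij.
  rewrite A1, A2, A3, B1, B2, B3.
  set (N := Rmax (Rabs (hx (wm m) - hz (wm m))) (Rabs (hy (wm m) - hz (wm m)) / 2)).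
  assert (Ha : Rabs (hx (wm m) - hz (wm m)) <= N) by apply Rmax_l.
  assert (Hb : Rabs (hy (wm m) - hz (wm m)) / 2 <= N) by apply Rmax_r.
  apply abs_le_iff in Ha. assert (Hb' : Rabs (hy (wm m) - hz (wm m)) <= 2 * N) by lra.
  apply abs_le_iff in Hb'.
  apply Rmax_lub.
  - apply abs_le_iff. lra.
  - assert (Rabs ((2 * hx (wm m) + 2 * hy (wm m) + hz (wm m)) / 5 -
     (hx (wm m) + 2 * ((2 * hx (wm m) + 2 * hy (wm m) + hz (wm m)) / 5) +
      2 * ((2 * hx (wm m) + hy (wm m) + 2 * hz (wm m)) / 5)) / 5) <= 2 * (11/50 * N)).
    { apply abs_le_iff. lra. }
    lra.
Qed.

Lemma Nm_pos m : 0 <= Nm m.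
Proof. eapply Rle_trans; [apply Rabs_pos | apply Rmax_l]. Qed.

Lemma Nm_bound m : Nm m <= Nm 0 * (11/50) ^ m.
Proof.
  induction m. simpl; lra.
  eapply Rle_trans. apply Nm_step. simpl. lra.
Qed.

Lemma local_bound m t : Rabs (t - 1/3) < (/4) ^ m / 3 ->
  Rabs (h (E t) - h (E (1/3))) <= 4 * Nm m.
Proof.
  intros Ht.
  set (z := hz (wm m)).
  set (r := Rmax (Rabs (hx (wm m) - z)) (Rabs (hy (wm m) - z))).
  assert (Hr1 : Rabs (hx (wm m) - z) <= r) by apply Rmax_l.
  assert (Hr2 : Rabs (hy (wm m) - z) <= r) by apply Rmax_r.
  assert (Hr0 : 0 <= r) by (eapply Rle_trans; [apply Rabs_pos|exact Hr1]).
  assert (Hbox : inbox (z - r) (z + r) (wm m)).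
  { apply abs_le_iff in Hr1; apply abs_le_iff in Hr2. unfold inbox; fold z; lra. }
  assert (Hall := box_all (wm m) (z - r) (z + r) (wm_onij m)
     (fun W' HW' => proj1 (box_ext _ _ W' HW' (wm m) (wm_onij m) Hbox))).
  assert (Hq : 0 < (/4) ^ m) by (apply pow_lt; lra).
  set (q := (/4) ^ m) in *.
  set (x := (t - 1/3) / q).
  assert (Hxt : t - 1/3 = x * q) by (unfold x; field; lra).
  apply Rabs_def2 in Ht.
  assert (Hx : -1/3 < x < 1/3) by nra.
  assert (H1 : E t = F (wm m) (E (1/3 + x))).
  { rewrite wm_E. fold q. f_equal. lra. }
  assert (H2 : E (1/3) = F (wm m) (E (1/3))).
  { rewrite wm_E. f_equal. ring. }
  rewrite H1, H2.
  assert (A1 := Hall (1/3 + x) ltac:(lra)).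
  assert (A2 := Hall (1/3) ltac:(lra)).
  assert (r <= 2 * Nm m).
  { unfold Nm, r. fold z. unfold Rmax at 1.
    destruct (Rle_dec (Rabs (hx (wm m) - z)) (Rabs (hy (wm m) - z))).
    - assert (H := Rmax_r (Rabs (hx (wm m) - z)) (Rabs (hy (wm m) - z) / 2)). lra.
    - assert (H := Rmax_l (Rabs (hx (wm m) - z)) (Rabs (hy (wm m) - z) / 2)).
      assert (0 <= Rabs (hy (wm m) - z)) by apply Rabs_pos. lra. }
  apply abs_le_iff. lra.
Qed.

Lemma level_aux x : 0 < x -> forall K, (/4) ^ K / 3 <= x -> forall n, x < (/4) ^ n / 3 ->
  exists m, (n <= m)%nat /\ (/4) ^ (S m) / 3 <= x < (/4) ^ m / 3.
Proof.
  intros Hx K; induction K; intros HK n Hn.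
  - assert ((/4) ^ n <= (/4) ^ 0) by (apply pow_decr; [lra|lia]). lra.
  - destruct (Rle_lt_dec ((/4) ^ K / 3) x) as [Hle|Hlt]; [apply IHK; auto|].
    exists K. destruct (Compare_dec.le_lt_dec n K) as [Hnk|Hnk]; [split; auto; lra|].
    assert ((/4) ^ n <= (/4) ^ (S K)) by (apply pow_decr; [lra|lia]). lra.
Qed.

Lemma level x n : 0 < x -> x < (/4) ^ n / 3 ->
  exists m, (n <= m)%nat /\ (/4) ^ (S m) / 3 <= x < (/4) ^ m / 3.
Proof.
  intros Hx Hn. destruct (pow_lt_1_zero (/4)) with (y := 3 * x) as [K HK].
  rewrite Rabs_right; lra. lra.
  specialize (HK K (le_n _)). rewrite Rabs_right in HK by (apply Rle_ge, pow_le; lra).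
  apply (level_aux x Hx K); auto. lra.
Qed.

Lemma deriv : is_derive (fun t => h (E t)) (1/3) 0.
Proof.
  apply is_derive_Reals. intros eps Heps.
  set (C := 4 * Nm 0).
  assert (HC : 0 <= C) by (unfold C; assert (H := Nm_pos 0); lra).
  destruct (pow_lt_1_zero (22/25)) with (y := eps / (12 * C + 1)) as [N HN].
  rewrite Rabs_right; lra. apply Rdiv_lt_0_compat; lra.
  specialize (HN N (le_n _)). rewrite Rabs_right in HN by (apply Rle_ge, pow_le; lra).
  assert (Hq : 0 < (/4) ^ N / 3) by (assert (0 < (/4)^N) by (apply pow_lt; lra); lra).
  exists (mkposreal _ Hq). simpl. intros hh Hh0 Hhd.
  assert (Hpos : 0 < Rabs hh) by (apply Rabs_pos_lt; auto).
  destruct (level (Rabs hh) N Hpos Hhd) as (m & HmN & Hm1 & Hm2).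
  assert (Hb := local_bound m (1/3 + hh)).
  replace (1/3 + hh - 1/3) with hh in Hb by ring.
  specialize (Hb Hm2).
  assert (HNm := Nm_bound m).
  replace (11/50) with (22/25 * /4) in HNm by field.
  rewrite Rpow_mult_distr in HNm.
  assert (Hdec : (22/25) ^ m <= (22/25) ^ N) by (apply pow_decr; [lra|auto]).
  assert (H4 : (/4) ^ m = 4 * (/4) ^ (S m)) by (simpl; field).
  assert (Hp1 : 0 <= (22/25) ^ m) by (apply pow_le; lra).
  assert (Hp2 : 0 <= (/4) ^ m) by (apply pow_le; lra).
  assert (HN0 := Nm_pos 0).
  assert (Hd : Rabs (h (E (1/3 + hh)) - h (E (1/3))) <= 12 * C * (22/25) ^ N * Rabs hh).
  { eapply Rle_trans. exact Hb.
    assert (4 * Nm m <= C * (22/25) ^ m * (/4) ^ m) by (unfold C; nra).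
    assert ((/4) ^ m <= 12 * Rabs hh) by lra.
    assert (C * (22/25) ^ m <= C * (22/25) ^ N) by nra.
    assert (0 <= C * (22/25)^m) by nra.
    nra. }
  assert (Hlt : 12 * C * (22/25) ^ N < eps).
  { assert (12 * C * (22/25)^N <= 12 * C * (eps / (12 * C + 1))) by nra.
    assert (12 * C * (eps / (12 * C + 1)) < eps).
    { apply (Rmult_lt_reg_r (12 * C + 1)); [lra|].
      replace (12 * C * (eps / (12 * C + 1)) * (12 * C + 1)) with (12 * C * eps) by (field; lra).
      nra. }
    lra. }
  rewrite Rminus_0_r. unfold Rdiv. rewrite Rabs_mult, Rabs_inv.
  apply (Rmult_lt_reg_r (Rabs hh)); auto.
  rewrite Rmult_assoc, Rinv_l by lra. nra.
Qed.

End Main.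

Theorem theorem6 (p0 p1 p2 : pt) (f : pt -> R) (m : nat) (u : list nat) (i j : nat) :
  unit_equilateral p0 p1 p2 ->
  harmonic p0 p1 p2 f ->
  word m u -> (i < 3)%nat -> (j < 3)%nat -> i <> j ->
  let v := Fword p0 p1 p2 u (vert p0 p1 p2 i) in
  let w := Fword p0 p1 p2 u (vert p0 p1 p2 j) in
  is_derive (fun t : R => f (padd v (pscal t (psub w v)))) (1/3) 0.
Proof.
  intros _ Hh [_ Hu] Hi Hj Hij v w.
  assert (D := deriv p0 p1 p2 f u i j (3 - i - j)%nat Hh Hu Hi Hj ltac:(lia) Hij ltac:(lia) ltac:(lia)).
  eapply is_derive_ext; [|exact D]. intros t; simpl.
  unfold v, w. rewrite Fword_Lin. reflexivity.
Qed.
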